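(* Let $n\ge 2$ be an integer and set, for real $r$ with $|r|>1$, $\rho(r)=r-\frac{|r|}{r}\sqrt{r^2-1}$. Then for every real $r$ with $|r|>1$, $$\int_{-1}^1 \frac{T_n(s)(1-s^2)^{\frac{3}{2}}}{(s-r)^3}\,ds = \frac{\pi}{4}\left\{\rho(r)^{n+1}\left[(n^2+2n+3)-3(n+1)\frac{|r|}{\sqrt{r^2-1}}\right]-\rho(r)^{n-1}\left[(n^2-2n+3)-3(n-1)\frac{|r|}{\sqrt{r^2-1}}\right]\right\}.$$
   Context: $T_k(s)=\cos(k\cos^{-1}s)$ is the Tchebyshev polynomial of the first kind. Since $|r|>1$, the integral is an ordinary (nonsingular) integral. *)

(* Defs.v *)
From Stdlib Require Import Reals.
From Coquelicot Require Import Coquelicot.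
Open Scope R_scope.

Definition chebT (k : nat) (s : R) : R := cos (INR k * acos s).

Definition rho (r : R) : R := r - (Rabs r / r) * sqrt (r ^ 2 - 1).

(* (1 - s^2)^(3/2), written as (1 - s^2) * sqrt(1 - s^2) (nonneg base on [-1,1]). *)
Definition pow3half (x : R) : R := x * sqrt x.

(* Main.v *)
Require Import Defs.
From Stdlib Require Import Reals Lra Lia Psatz.
From Coquelicot Require Import Coquelicot.
Open Scope R_scope.
Lemma cosr_ne r t : 1 < Rabs r -> cos t - r <> 0.
Proof. intros H. pose proof (COS_bound t). unfold Rabs in H; destruct (Rcase_abs r); lra. Qed.

Lemma is_RInt_conv (f g : R -> R) (l l' : R) :
  (forall x, 0 < x < PI -> f x = g x) -> l = l' -> is_RInt f 0 PI l -> is_RInt g 0 PI l'.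
Proof.
  intros Hfg <- H. apply is_RInt_ext with f; auto.
  intros x. rewrite Rmin_left, Rmax_right by (pose proof PI_RGT_0; lra). auto.
Qed.

Lemma is_RInt_lin (f g : R -> R) a b (If Ig : R) (al be : R) :
  is_RInt f a b If -> is_RInt g a b Ig ->
  is_RInt (fun x => al * f x + be * g x) a b (al * If + be * Ig).
Proof.
  intros H1 H2. exact (is_RInt_plus _ _ _ _ _ _ (is_RInt_scal _ _ _ al _ H1) (is_RInt_scal _ _ _ be _ H2)).
Qed.

Lemma cont_of_deriv (f : R -> R) x : ex_derive f x -> continuous f x.
Proof. intros H. exact (@ex_derive_continuous R_AbsRing R_NormedModule f x H). Qed.

Lemma sin_INR_PI k : sin (INR k * PI) = 0.
Proof. apply sin_eq_0_1. exists (Z.of_nat k). rewrite <- INR_IZR_INZ. reflexivity. Qed.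

Lemma cos_int0 k : is_RInt (fun t => cos (INR (S k) * t)) 0 PI 0.
Proof.
  assert (Hk : INR (S k) <> 0) by (apply not_0_INR; lia).
  assert (H0 := sin_INR_PI (S k)).
  set (a := INR (S k)) in *. clearbody a.
  assert (H : is_RInt (fun t => cos (a * t)) 0 PI
     (minus ((fun t => sin (a * t) / a) PI) ((fun t => sin (a * t) / a) 0))).
  { apply (is_RInt_derive (fun t => sin (a * t) / a) (fun t => cos (a * t))).
    - intros x _. auto_derive; auto. field; auto.
    - intros x _. apply cont_of_deriv. auto_derive; auto. }
  eapply is_RInt_conv; [intros; reflexivity| |apply H].
  simpl. rewrite H0, Rmult_0_r, sin_0. unfold minus, plus, opp; simpl. field; auto.
Qed.

Lemma K0 r p : 1 < Rabs r -> -1 < p < 1 -> p <> 0 -> r = (p^2+1)/(2*p) ->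
  is_RInt (fun t => cos (INR 0 * t) / (cos t - r)) 0 PI (-2*PI*p/(1-p^2) * p ^ 0).
Proof.
  intros Hr Hp Hp0 Hrp.
  assert (Hpp : 1 - p^2 <> 0) by nra.
  assert (Hc : forall t, 1 + - (p * cos t) <> 0).
  { intros t. pose proof (COS_bound t). nra. }
  assert (H : is_RInt (fun t => cos (INR 0 * t) / (cos t - r)) 0 PI
    (minus ((fun t => -2*p/(1-p^2) * (t + 2*atan(p*sin t/(1-p*cos t)))) PI)
           ((fun t => -2*p/(1-p^2) * (t + 2*atan(p*sin t/(1-p*cos t)))) 0))).
  { apply (is_RInt_derive (fun t => -2*p/(1-p^2) * (t + 2*atan(p*sin t/(1-p*cos t))))
                 (fun t => cos (INR 0 * t) / (cos t - r))).
  - intros t _. auto_derive.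
    + apply Hc.
    + replace (INR 0 * t) with 0 by (simpl; ring). rewrite cos_0.
      assert (Hs: sin t ^2 = 1 - cos t ^2). { rewrite <- (sin2_cos2 t). unfold Rsqr. ring. }
      pose proof (cosr_ne r t Hr) as Hu.
      subst r. pose proof (Hc t).
      set (c := cos t) in *. set (s := sin t) in *.
      assert (HD : - p ^ 2 + 2 * p * c - 1 <> 0).
      { intro E. apply Hu. field_simplify_eq; [lra|auto]. }
      field_simplify. rewrite Hs. field.
      { split; [exact HD|]. intro E. apply HD.
        assert (E2 : (1 - p^2) * (- p ^ 2 + 2 * p * c - 1) = 0) by nra.
        destruct (Rmult_integral _ _ E2); [contradiction|auto]. }
      { split; auto. intro E. apply HD. nra. }
      { repeat split; auto.
        - assert (0 < (1 + - (p * c)) * (1 + - (p * c))).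
          { apply Rmult_lt_0_compat; pose proof (COS_bound t); unfold c; nra. }
          nra.
        - intro; apply Hpp; nra. }
  - intros x _. apply cont_of_deriv. auto_derive. apply cosr_ne; auto. }
  eapply is_RInt_conv; [intros; reflexivity| |apply H].
  simpl. rewrite sin_PI, sin_0, cos_PI, cos_0. unfold minus, plus, opp; simpl.
    replace (p * 0 / (1 - p * -1)) with 0 by (field; nra).
    replace (p * 0 / (1 - p * 1)) with 0 by (field; nra).
    rewrite atan_0. field. auto.
intro; apply Hpp; nra.
Qed.

Lemma int_one : is_RInt (fun _ => 1) 0 PI PI.
Proof. assert (H := @is_RInt_const R_NormedModule 0 PI 1). unfold scal in H; simpl in H; unfold mult in H; simpl in H. replace PI with ((PI - 0) * 1) at 2 by ring. exact H. Qed.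

Lemma Kall r p : 1 < Rabs r -> -1 < p < 1 -> p <> 0 -> r = (p^2+1)/(2*p) ->
  forall k, is_RInt (fun t => cos (INR k * t) / (cos t - r)) 0 PI (-2*PI*p/(1-p^2) * p ^ k).
Proof.
  intros Hr Hp Hp0 Hrp.
  assert (Hpp : 1 - p^2 <> 0) by nra.
  assert (HK0 := K0 r p Hr Hp Hp0 Hrp).
  cut (forall k, is_RInt (fun t => cos (INR k * t) / (cos t - r)) 0 PI (-2*PI*p/(1-p^2) * p ^ k)
     /\ is_RInt (fun t => cos (INR (S k) * t) / (cos t - r)) 0 PI (-2*PI*p/(1-p^2) * p ^ (S k))).
  { intros H k. exact (proj1 (H k)). }
  induction k as [|k [IH1 IH2]].
  - split; [exact HK0|].
    assert (H := is_RInt_lin _ _ _ _ _ _ 1 r int_one HK0).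
    eapply is_RInt_conv; [| |exact H].
    + intros x _. pose proof (cosr_ne r x Hr). replace (INR 1 * x) with x by (simpl; ring).
      replace (INR 0 * x) with 0 by (simpl; ring). rewrite cos_0. field. exact H0.
    + subst r. field. split; assumption.
  - split; [exact IH2|].
    assert (H1 := is_RInt_lin _ _ _ _ _ _ 2 (2*r) (cos_int0 k) IH2).
    assert (H := is_RInt_lin _ _ _ _ _ _ 1 (-1) H1 IH1).
    eapply is_RInt_conv; [| |exact H].
    + intros x _. pose proof (cosr_ne r x Hr).
      assert (E1 : INR (S (S k)) * x = INR (S k) * x + x) by (rewrite (S_INR (S k)); ring).
      assert (E2 : INR k * x = INR (S k) * x - x) by (rewrite (S_INR k); ring).
      rewrite E1, E2, cos_plus, cos_minus. field. exact H0.
    + simpl. subst r. field. split; [intro; apply Hpp; nra | assumption].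
Qed.

Lemma mainT r p m : 1 < Rabs r -> -1 < p < 1 -> p <> 0 -> r = (p^2+1)/(2*p) ->
  is_RInt (fun t => cos (INR (m+2) * t) * sin t ^ 4 / (cos t - r) ^ 3) 0 PI
   (/2 * ( -(INR (m+2)^2/2) * (-2*PI*p/(1-p^2) * p ^ (m+2))
          + ((INR (m+2)+3)*INR (m+4)/4) * (-2*PI*p/(1-p^2) * p ^ (m+4))
          + ((INR (m+2)-3)*INR m/4) * (-2*PI*p/(1-p^2) * p ^ m))).
Proof.
  intros Hr Hp Hp0 Hrp.
  assert (Ka := Kall r p Hr Hp Hp0 Hrp (m+2)).
  assert (Kb := Kall r p Hr Hp Hp0 Hrp (m+4)).
  assert (Kc := Kall r p Hr Hp Hp0 Hrp m).
  assert (sa := sin_INR_PI (m+2)). assert (sb := sin_INR_PI (m+4)). assert (sc := sin_INR_PI m).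
  assert (eN : INR (m+2) = INR m + 2) by (rewrite plus_INR; simpl; ring).
  assert (e4 : INR (m+4) = INR m + 4) by (rewrite plus_INR; simpl; ring).
  set (C := -2*PI*p/(1-p^2)) in *. clearbody C.
  set (N := INR (m+2)) in *. set (M4 := INR (m+4)) in *. set (M := INR m) in *.
  clearbody N M4 M.
  assert (Hu := fun t => cosr_ne r t Hr).
  set (G1 := fun t => -(N/2)*sin(N*t) + ((N+3)/4)*sin(M4*t) + ((N-3)/4)*sin(M*t)).
  set (G1p := fun t => -(N^2/2)*cos(N*t) + ((N+3)*M4/4)*cos(M4*t) + ((N-3)*M/4)*cos(M*t)).
  set (H := fun t => /2 * (cos(N*t) * sin t^3/(cos t - r)^2 - G1 t/(cos t - r))).
  assert (HA : is_RInt (fun t => cos (N * t) * sin t ^ 4 / (cos t - r) ^ 3 - /2 * G1p t / (cos t - r))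
                 0 PI (minus (H PI) (H 0))).
  { apply (is_RInt_derive H).
    - intros t _. unfold H, G1, G1p. auto_derive.
      + repeat split; try exact I; try apply (Hu t); repeat apply Rmult_integral_contrapositive_currified; try apply (Hu t); try apply R1_neq_R0.
      + assert (E4 : sin (M4 * t) = sin (N*t) * (1 - 2 * sin t * sin t) + cos (N*t) * (2 * sin t * cos t)).
        { replace (M4 * t) with (N*t + 2*t) by (rewrite e4, eN; ring).
          rewrite sin_plus, cos_2a_sin, sin_2a. ring. }
        assert (E0 : sin (M * t) = sin (N*t) * (1 - 2 * sin t * sin t) - cos (N*t) * (2 * sin t * cos t)).
        { replace (M * t) with (N*t - 2*t) by (rewrite eN; ring).
          rewrite sin_minus, cos_2a_sin, sin_2a. ring. }
        rewrite E4, E0. field. apply Hu.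
    - intros t _. apply cont_of_deriv. unfold G1p. auto_derive.
      repeat split; try exact I; try apply (Hu t); repeat apply Rmult_integral_contrapositive_currified; try apply (Hu t); try apply R1_neq_R0. }
  assert (HB1 := is_RInt_lin _ _ _ _ _ _ (/2*(-(N^2/2))) (/2*((N+3)*M4/4)) Ka Kb).
  assert (HB := is_RInt_lin _ _ _ _ _ _ 1 (/2*((N-3)*M/4)) HB1 Kc).
  assert (HC := is_RInt_lin _ _ _ _ _ _ 1 1 HA HB).
  eapply is_RInt_conv; [| |exact HC].
  - intros x _. unfold G1p. field. apply Hu.
  - unfold H, G1, minus, plus, opp; simpl.
    rewrite sin_PI, sin_0, sa, sb, sc, !Rmult_0_r, sin_0.
    field. split; apply Hu.
Qed.

Lemma rho_props r : 1 < Rabs r ->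
  -1 < rho r < 1 /\ rho r <> 0 /\ r = (rho r ^ 2 + 1) / (2 * rho r) /\
  Rabs r / sqrt (r ^ 2 - 1) = r / (r - rho r).
Proof.
  intros H. unfold rho.
  assert (HS2 : sqrt (r^2-1) ^ 2 = r^2 - 1).
  { rewrite <- Rsqr_pow2. apply Rsqr_sqrt. unfold Rabs in H; destruct (Rcase_abs r); nra. }
  assert (HSp : 0 < sqrt (r^2-1)).
  { apply sqrt_lt_R0. unfold Rabs in H; destruct (Rcase_abs r); nra. }
  set (S := sqrt (r^2-1)) in *.
  unfold Rabs in *; destruct (Rcase_abs r) as [Hn|Hn].
  - replace (- r / r) with (-1) by (field; lra).
    assert (-1 < r + S < 0) by nra.
    split; [lra|]. split; [lra|]. split.
    + field_simplify; [|lra]. replace (r - -1*S) with (r+S) by ring. field_simplify_eq; nra.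
    + replace (r - (r - -1 * S)) with (-S) by ring. field; lra.
  - replace (r / r) with 1 by (field; lra).
    assert (0 < r - S < 1) by nra.
    split; [lra|]. split; [lra|]. split.
    + replace (r - 1*S) with (r-S) by ring. field_simplify_eq; nra.
    + replace (r - (r - 1 * S)) with (S) by ring. reflexivity.
Qed.

Fixpoint Tp (k : nat) (s : R) : R :=
  match k with
  | O => 1
  | S k' => match k' with O => s | S k'' => 2 * s * Tp k' s - Tp k'' s end
  end.

Lemma Tp_SS k s : Tp (S (S k)) s = 2 * s * Tp (S k) s - Tp k s.
Proof. reflexivity. Qed.

Lemma Tp_cos k a : Tp k (cos a) = cos (INR k * a).
Proof.
  cut (forall k, Tp k (cos a) = cos (INR k * a) /\ Tp (S k) (cos a) = cos (INR (S k) * a)).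
  { intros H. exact (proj1 (H k)). }
  clear k; intros k; induction k as [|k [IH1 IH2]].
  - split.
    + simpl. rewrite Rmult_0_l, cos_0. reflexivity.
    + simpl. rewrite Rmult_1_l. reflexivity.
  - split; [exact IH2|].
    rewrite Tp_SS, IH1, IH2.
    assert (E1 : INR (S (S k)) * a = INR (S k) * a + a) by (rewrite (S_INR (S k)); ring).
    assert (E2 : INR k * a = INR (S k) * a - a) by (rewrite (S_INR k); ring).
    rewrite E1, E2, cos_plus, cos_minus. ring.
Qed.

Lemma cont_plusR (f g : R -> R) x : continuous f x -> continuous g x -> continuous (fun y => f y + g y) x.
Proof. intros H1 H2. exact (@continuous_plus R_UniformSpace R_AbsRing R_NormedModule f g x H1 H2). Qed.
Lemma cont_multR (f g : R -> R) x : continuous f x -> continuous g x -> continuous (fun y => f y * g y) x.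
Proof. intros H1 H2. exact (@continuous_mult R_UniformSpace R_AbsRing f g x H1 H2). Qed.
Lemma cont_oppR (f : R -> R) x : continuous f x -> continuous (fun y => - f y) x.
Proof. intros H1. exact (@continuous_opp R_UniformSpace R_AbsRing R_NormedModule f x H1). Qed.

Lemma Tp_cont k x : continuous (Tp k) x.
Proof.
  cut (forall k, continuous (Tp k) x /\ continuous (Tp (S k)) x).
  { intros H. exact (proj1 (H k)). }
  clear k; intros k; induction k as [|k [IH1 IH2]].
  - split; apply cont_of_deriv; simpl; auto_derive; exact I.
  - split; [exact IH2|].
    change (continuous (fun y => 2 * y * Tp (S k) y + - Tp k y) x).
    apply cont_plusR; [apply cont_multR|apply cont_oppR]; auto.
    apply cont_of_deriv; auto_derive; exact I.
Qed.

Definition ft n r s := Tp n s * sqrt (1 - s^2) * ((1 - s^2) / (s - r)^3).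

Lemma ft_cont n r x : x - r <> 0 -> continuous (ft n r) x.
Proof.
  intros Hx. unfold ft. apply cont_multR; [apply cont_multR|].
  - apply Tp_cont.
  - apply (continuous_sqrt_comp (fun s => 1 - s^2)). apply cont_of_deriv; auto_derive; exact I.
  - apply cont_of_deriv; auto_derive.
    repeat split; try exact I; repeat apply Rmult_integral_contrapositive_currified; try exact Hx; try apply R1_neq_R0.
Qed.

Lemma eqR (a b : R) : a = b -> a = b.
Proof. auto. Qed.

Theorem mainTheorem13 (n : nat) (r : R) :
  (2 <= n)%nat -> 1 < Rabs r ->
  RInt (fun s => chebT n s * pow3half (1 - s ^ 2) / (s - r) ^ 3) (-1) 1
  = PI / 4 *
    ( rho r ^ (n + 1) *
        ((INR n ^ 2 + 2 * INR n + 3) - 3 * (INR n + 1) * (Rabs r / sqrt (r ^ 2 - 1)))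
    - rho r ^ (n - 1) *
        ((INR n ^ 2 - 2 * INR n + 3) - 3 * (INR n - 1) * (Rabs r / sqrt (r ^ 2 - 1)))).
Proof.
  intros Hn Hr.
  destruct (rho_props r Hr) as (Hp & Hp0 & Hrp & Hq).
  rewrite Hq.
  set (p := rho r) in *. clearbody p.
  destruct (Nat.le_exists_sub 2 n Hn) as [m [Hm _]].
  replace n with (m + 2)%nat in * by lia. clear Hm Hn.
  assert (Hu := fun t => cosr_ne r t Hr).
  assert (E1 : RInt (fun s => chebT (m+2) s * pow3half (1 - s ^ 2) / (s - r) ^ 3) (-1) 1
             = RInt (ft (m+2) r) (-1) 1).
  { apply RInt_ext. intros x Hx.
    rewrite Rmin_left, Rmax_right in Hx by lra.
    unfold chebT, ft, pow3half.
    replace (acos x) with (acos x) by reflexivity.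
    rewrite <- (Tp_cos (m+2) (acos x)), cos_acos by lra.
    assert (x - r <> 0).
    { intro. unfold Rabs in Hr; destruct (Rcase_abs r); lra. }
    apply eqR. field. auto. }
  rewrite E1.
  assert (HC := is_RInt_comp (ft (m+2) r) cos (fun y => - sin y) PI 0).
  assert (HC' : is_RInt (fun y => scal (- sin y) (ft (m+2) r (cos y))) PI 0
                  (RInt (ft (m+2) r) (cos PI) (cos 0))).
  { apply HC.
    - intros x _. apply ft_cont. apply Hu.
    - intros x _. split.
      + auto_derive; [exact I| ring].
      + apply cont_of_deriv. auto_derive. exact I. }
  clear HC.
  rewrite cos_PI, cos_0 in HC'.
  assert (HO := is_RInt_opp _ _ _ _ (is_RInt_swap _ _ _ _ HC')).
  assert (HT := mainT r p m Hr Hp Hp0 Hrp).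
  assert (HO' : is_RInt (fun t => cos (INR (m+2) * t) * sin t ^ 4 / (cos t - r) ^ 3) 0 PI
                   (RInt (ft (m+2) r) (-1) 1)).
  { eapply is_RInt_conv; [| |exact HO].
    - intros y Hy. unfold opp, scal; simpl; unfold mult; simpl.
      unfold ft. rewrite Tp_cos.
      replace (1 - cos y ^ 2) with (sin y ^ 2) by (rewrite <- (sin2_cos2 y); unfold Rsqr; ring).
      rewrite sqrt_pow2 by (apply sin_ge_0; lra).
      field. apply Hu.
    - unfold opp; simpl. ring. }
  rewrite <- (is_RInt_unique _ _ _ _ HO'), (is_RInt_unique _ _ _ _ HT).
  apply eqR.
  replace (m + 2 + 1)%nat with (m + 3)%nat by lia.
  replace (m + 2 - 1)%nat with (m + 1)%nat by lia.
  rewrite !pow_add, !plus_INR. simpl INR.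
  assert (Hpp : 1 - p^2 <> 0) by nra.
  assert (Hrp3 : r - p = (1 - p^2) / (2 * p)) by (rewrite Hrp; field; auto).
  rewrite Hrp3. rewrite Hrp.
  field. split; assumption.
Qed.
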